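(* Let $F_1(x)=x^{t_1}$, $F_2(x)=x^{t_2}$ be monomial power permutations of $GF(2^m)$ with $t_1,t_2\in C^*_i$ for some $i$, and let $S=STS(\mathcal H^n)$. Then the self-embeddings $S\cup F_1(S)$ and $S\cup F_2(S)$ are isomorphic, and $V^*_{F_1}(a)=V^*_{F_2}(a)$ and $v_{F_1}(a)=v_{F_2}(a)$ for all nonzero $a$ (and these values do not depend on $a$).
   Context: $n=2^m-1$; a monomial power permutation is $F(x)=x^t$ with $\gcd(t,n)=1$. $S=STS(\mathcal H^n)$ is the set of 3-subsets $\{a,b,c\}$ of nonzero elements of $GF(2^m)$ with $a+b+c=0$; $F(S)=\{\{F(a),F(b),F(c)\}:\{a,b,c\}\in S\}$. The cyclotomic coset of $i$ is $C_i=\{i,2i,4i,\dots\}$ modulo $2^m-1$; $C^*_i$ is the union of $C_i$ and the cyclotomic coset of the multiplicative inverse of $i$ modulo $2^m-1$. Self-embeddings $S\cup F_1(S)$, $S\cup F_2(S)$ are isomorphic if there is a permutation $\sigma$ of the nonzero elements with either $\sigma(S)=S,\sigma(F_1(S))=F_2(S)$ or $\sigma(S)=F_2(S),\sigma(F_1(S))=S$. For nonzero $a$: $v_F(a)=|\{x+F^{-1}(a+F(x)) : x\in GF(2^m)\}|$; with $\{a,a_i,a+a_i\}$ ($i=1,\dots,2^{m-1}-1$) the triples of $S$ through $a$ and $z_i=F(F^{-1}(a_i)+F^{-1}(a+a_i))$, $V^*_F(a)$ is the multiset of multiplicities of the distinct elements in the multiset $\{z_i\}$. *)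

(* Defs.v *)
From HB Require Import structures.
From mathcomp Require Import all_boot all_order all_algebra all_fingroup all_field.
Set Implicit Arguments. Unset Strict Implicit. Unset Printing Implicit Defensive.
Import GRing.Theory.
Local Open Scope ring_scope.

Section Defs.
Variable F : finFieldType.

Definition powf (t : nat) : F -> F := fun x => x ^+ t.
Definition pinv (t : nat) : F -> F := finv (powf t).

(* monomial power permutation: gcd(t, 2^m-1) = 1 (t > 0 so that 0^t = 0) *)
Definition monomial_perm (m t : nat) : Prop :=
  (0 < t)%N /\ coprime t (2 ^ m - 1).

Definition STS : {set {set F}} :=
  [set B : {set F} | [&& #|B| == 3%N, 0 \notin B & \sum_(x in B) x == 0]].

Definition img_sys (f : F -> F) (S : {set {set F}}) : {set {set F}} :=
  [set f @: B | B : {set F} in S].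

Definition selfemb_iso (t1 t2 : nat) : Prop :=
  exists sigma : {perm F},
    sigma 0 = 0 /\
    ((img_sys sigma STS = STS /\
      img_sys sigma (img_sys (powf t1) STS) = img_sys (powf t2) STS) \/
     (img_sys sigma STS = img_sys (powf t2) STS /\
      img_sys sigma (img_sys (powf t1) STS) = STS)).

Definition vF (t : nat) (a : F) : nat :=
  #|[set x + pinv t (a + powf t x) | x : F]|.

(* for a triple B = {a, b, a+b} through a: z = F(F^{-1}(b) + F^{-1}(a+b)) *)
Definition zval (t : nat) (a : F) (B : {set F}) : F :=
  let b := odflt 0 [pick x in B :\ a] in
  powf t (pinv t b + pinv t (a + b)).

Definition zs (t : nat) (a : F) : seq F :=
  [seq zval t a B | B <- enum [set B in STS | a \in B]].

Definition Vstar (t : nat) (a : F) : seq nat :=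
  [seq count_mem z (zs t a) | z <- undup (zs t a)].
End Defs.

Definition in_coset (n i t : nat) : Prop :=
  exists k : nat, t = i * 2 ^ k %[mod n].

Definition in_coset_star (n i t : nat) : Prop :=
  in_coset n i t \/
  exists j : nat, i * j = 1 %[mod n] /\ in_coset n j t.

(* Main.v *)
Require Import Defs.
From HB Require Import structures.
From mathcomp Require Import all_boot all_order all_algebra all_fingroup all_field.
From mathcomp Require Import ring.
From mathcomp Require Import zify.
Import GRing.Theory.
Local Open Scope ring_scope.
Set Implicit Arguments. Unset Strict Implicit.

Definition prof (T : eqType) (s : seq T) := [seq count_mem z s | z <- undup s].

Lemma prof_perm (T : eqType) (s1 s2 : seq T) : perm_eq s1 s2 -> perm_eq (prof s1) (prof s2).
Proof.
move=> H; rewrite /prof (eq_map (fun z => (seq.permP H) (pred1 z))).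
exact: perm_map (perm_undup (perm_mem H)).
Qed.

Lemma prof_map (T U : eqType) (h : T -> U) (hi : injective h) s : prof (map h s) = prof s.
Proof.
rewrite /prof undup_map_inj // -map_comp; apply: eq_map => z /=.
by rewrite count_map; apply: eq_count => x /=; rewrite /= (inj_eq hi).
Qed.

Section Gen.
Variable F : finFieldType.
Hypothesis c2 : 2 \in [pchar F].
Let addxx := addrr_pchar2 c2.

Lemma STS3 (B : {set F}) a b : B \in STS F -> a \in B -> b \in B -> a != b ->
  B = [set a; b; a + b].
Proof.
rewrite inE => /and3P [/eqP c3 n0 /eqP s0] aB bB ab.
have bB' : b \in B :\ a by rewrite !inE eq_sym ab.
have : #|B :\ a :\ b| = 1%N.
  move: c3; rewrite (cardsD1 a B) aB (cardsD1 b (B :\ a)) bB'. by case.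
move/eqP/cards1P => [c Hc].
have cB : c \in B :\ a :\ b by rewrite Hc set11.
have EB : B = a |: (b |: [set c]) by rewrite -Hc !setD1K.
move: cB; rewrite !inE => /and3P [cb ca _].
move: s0; rewrite EB big_setU1 /=; last by rewrite !inE negb_or ab eq_sym ca.
rewrite big_setU1 /=; last by rewrite !inE eq_sym cb.
rewrite big_set1 addrA => /eqP; rewrite addr_eq0 oppr_pchar2 // => /eqP Hc'.
by rewrite Hc'; apply/setP=> x; rewrite !inE ?orbA.
Qed.

Lemma addrl_eq (a b : F) : (a + b == a) = (b == 0).
Proof. by rewrite -[X in _ == X]addr0 (inj_eq (addrI a)). Qed.
Lemma addrr_eq (a b : F) : (a + b == b) = (a == 0).
Proof. by rewrite -[X in _ == X]add0r (inj_eq (addIr b)). Qed.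
Lemma addr_eq0c (a b : F) : (a + b == 0) = (a == b).
Proof. by rewrite addr_eq0 oppr_pchar2. Qed.

Lemma STS_in (a b : F) : a != 0 -> b != 0 -> a != b -> [set a; b; a + b] \in STS F.
Proof.
move=> a0 b0 ab.
have E : [set a; b; a + b] = a |: (b |: [set a + b]).
  by apply/setP=> x; rewrite !inE ?orbA.
rewrite E inE; apply/and3P; split.
- rewrite cardsU1 cardsU1 cards1 !inE [a == a + b]eq_sym addrl_eq.
  by rewrite [b == a + b]eq_sym addrr_eq (negbTE a0) (negbTE b0) (negbTE ab).
- by rewrite !inE !negb_or eq_sym a0 eq_sym b0 eq_sym addr_eq0c ab.
- rewrite big_setU1 /=; last by rewrite !inE negb_or ab eq_sym addrl_eq b0.
  rewrite big_setU1 /=; last by rewrite !inE eq_sym addrr_eq a0.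
  by rewrite big_set1 addrA addxx.
Qed.

Definition X (a : F) := [set B in STS F | a \in B].

Section Addi.
Variable g : F -> F.
Hypothesis ginj : injective g.
Hypothesis gD : {morph g : x y / x + y}.
Hypothesis g0 : g 0 = 0.

Lemma STS_img B : B \in STS F -> g @: B \in STS F.
Proof.
rewrite !inE => /and3P [c3 n0 s0]; apply/and3P; split.
- by rewrite card_imset.
- by rewrite -g0 mem_imset.
- rewrite big_imset /=; last by move=> x y _ _; apply: ginj.
  by rewrite -(big_morph g gD g0) (eqP s0) g0.
Qed.

Lemma img_STS : img_sys g (STS F) = STS F.
Proof.
apply/eqP; rewrite eqEcard; apply/andP; split.
  by apply/subsetP=> B' /imsetP [B HB ->]; apply: STS_img.
rewrite card_imset; [exact: leqnn | exact: imset_inj].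
Qed.

Lemma X_img (a : F) : [set g @: B | B : {set F} in X a] = X (g a).
Proof.
apply/setP=> B'; apply/imsetP/idP.
  case=> B; rewrite [_ \in X _]inE => /andP [HB aB] ->.
  rewrite [_ \in X _]inE; apply/andP; split; first exact: STS_img.
  exact: imset_f.
rewrite [_ \in X _]inE => /andP [HB' aB'].
have : B' \in img_sys g (STS F) by rewrite img_STS.
case/imsetP=> B HB EB.
exists B => //; rewrite [_ \in X _]inE HB /=.
by move: aB'; rewrite EB mem_imset.
Qed.
End Addi.
End Gen.

Lemma reindex (T : finType) (R : eqType) (A B : {set T}) (h : T -> T) (f : T -> R) :
  {in A &, injective h} -> h @: A = B ->
  perm_eq [seq f y | y <- enum B] [seq f (h x) | x <- enum A].
Proof.
move=> hi hAB; rewrite (map_comp f h); apply: perm_map.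
apply: uniq_perm; first exact: enum_uniq.
  rewrite map_inj_in_uniq; first exact: enum_uniq.
  move=> x y. rewrite !mem_enum. exact: hi.
move=> y; rewrite mem_enum -hAB; apply/imsetP/mapP=> [[x xA ->]|[x xA ->]].
  exists x => //. by rewrite mem_enum.
exists x => //. by rewrite -mem_enum.
Qed.


Definition zg (F : finFieldType) (P Q : F -> F) (a : F) (B : {set F}) : F :=
  let b := odflt 0 [pick x in B :\ a] in P (Q b + Q (a + b)).
Definition zsg (F : finFieldType) (P Q : F -> F) (a : F) : seq F :=
  [seq zg P Q a B | B <- enum (X a)].
Definition Ag (F : finFieldType) (P Q : F -> F) (a : F) : {set F} :=
  [set x + Q (a + P x) | x : F].

Section Gen2.
Variable F : finFieldType.
Hypothesis c2 : 2 \in [pchar F].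
Let addxx := addrr_pchar2 c2.

Lemma other (B : {set F}) a : B \in STS F -> a \in B -> exists b, b \in B /\ b != a.
Proof.
move=> HB aB; have: B :\ a != set0.
  apply/eqP=> E; move: HB; rewrite inE => /and3P [/eqP c3 _ _].
  by move: c3; rewrite (cardsD1 a B) aB E cards0.
case/set0Pn=> b; rewrite !inE => /andP [ba bB]; by exists b.
Qed.

Lemma STS_facts (B : {set F}) a b : B \in STS F -> a \in B -> b \in B -> b != a ->
  [/\ a != 0, b != 0, a + b \in B & a + b != 0].
Proof.
move=> HB aB bB ba.
have ab : a != b by rewrite eq_sym.
have E := STS3 c2 HB aB bB ab.
have n0 : 0 \notin B by move: HB; rewrite inE => /and3P [].
split.
- by apply: contraNneq n0 => <-.
- by apply: contraNneq n0 => <-.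
- by rewrite E !inE eqxx !orbT.
- by rewrite addr_eq0c // eq_sym.
Qed.

Lemma zg_any P Q (B : {set F}) a b : B \in STS F -> a \in B -> b \in B -> b != a ->
  zg P Q a B = P (Q b + Q (a + b)).
Proof.
move=> HB aB bB ba; rewrite /zg.
case: pickP => [b' | none] /=; last by move: (none b); rewrite !inE ba bB.
rewrite !inE => /andP [b'a b'B].
have ab : a != b by rewrite eq_sym.
have E := STS3 c2 HB aB bB ab.
move: b'B; rewrite E !inE (negbTE b'a) /= => /orP [/eqP -> // | /eqP ->].
by rewrite addrA addxx add0r addrC.
Qed.
End Gen2.

Section PQ.
Variable F : finFieldType.
Hypothesis c2 : 2 \in [pchar F].
Let addxx := addrr_pchar2 c2.
Variables P Q : F -> F.
Hypothesis PK : cancel P Q.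
Hypothesis QK : cancel Q P.
Hypothesis PM : {morph P : x y / x * y}.
Hypothesis P0 : P 0 = 0.
Hypothesis P1 : P 1 = 1.

Lemma Pinj : injective P. Proof. exact: can_inj PK. Qed.
Lemma Qinj : injective Q. Proof. exact: can_inj QK. Qed.
Lemma QM : {morph Q : x y / x * y}.
Proof. by move=> x y; apply: Pinj; rewrite PM !QK. Qed.
Lemma Q0 : Q 0 = 0. Proof. by apply: Pinj; rewrite QK P0. Qed.
Lemma P_eq0 x : (P x == 0) = (x == 0).
Proof. by rewrite -{1}P0 (inj_eq Pinj). Qed.
Lemma Q_eq0 x : (Q x == 0) = (x == 0).
Proof. by rewrite -{1}Q0 (inj_eq Qinj). Qed.
Lemma PV x : P x^-1 = (P x)^-1.
Proof.
have [->|x0] := eqVneq x 0; first by rewrite invr0 P0 invr0.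
have Px0 : P x != 0 by rewrite P_eq0.
apply: (mulfI Px0); rewrite -PM mulfV // mulfV //.
Qed.
Lemma QV x : Q x^-1 = (Q x)^-1.
Proof. by apply: Pinj; rewrite PV !QK. Qed.

Lemma Q_scale l y : Q (P l * y) = l * Q y.
Proof. by rewrite QM PK. Qed.

Lemma zs_scale l a : l != 0 ->
  perm_eq (zsg P Q (P l * a)) (map (fun z => P l * z) (zsg P Q a)).
Proof.
move=> l0; have Pl0 : P l != 0 by rewrite P_eq0.
rewrite /zsg.
have gi : injective (fun x => P l * x) by apply: mulfI.
have gD : {morph (fun x => P l * x) : x y / x + y} by move=> x y; rewrite mulrDr.
have g0 : (fun x => P l * x) 0 = 0 by rewrite mulr0.
have E : [set (fun x => P l * x) @: B | B : {set F} in X a] = X (P l * a).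
  exact: (X_img gi gD g0 a).
have R := reindex (zg P Q (P l * a)) (fun x y _ _ H => imset_inj gi H) E.
apply: (perm_trans R).
rewrite -map_comp; apply/seq.permP => p; congr (count p _); apply/eq_in_map => B.
rewrite mem_enum inE => /andP [HB aB] /=.
have [b [bB ba]] := other HB aB.
rewrite (zg_any c2 P Q HB aB bB ba).
have HB' := STS_img gi gD g0 HB.
rewrite (zg_any c2 P Q HB' (imset_f _ aB) (imset_f _ bB)); last by rewrite (inj_eq gi).
by rewrite -mulrDr !Q_scale -mulrDr PM.
Qed.

Lemma A_scale l a : l != 0 -> #|Ag P Q (P l * a)| = #|Ag P Q a|.
Proof.
move=> l0; suff -> : Ag P Q (P l * a) = [set l * x | x in Ag P Q a].
  by rewrite (card_imset _ (mulfI l0)).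
apply/setP=> z; apply/imsetP/imsetP => [[x _ ->]|[y /imsetP [x _ ->] ->]].
  exists (l^-1 * x + Q (a + P (l^-1 * x))); first exact: imset_f.
  rewrite mulrDr mulrA mulfV // mul1r; congr (_ + _).
  by rewrite -Q_scale mulrDr -PM mulrA mulfV // mul1r.
exists (l * x) => //; rewrite mulrDr; congr (_ + _).
by rewrite -Q_scale mulrDr -PM.
Qed.


Lemma A_inv c : c != 0 -> #|Ag Q P c| = #|Ag P Q c|.
Proof.
move=> c0.
pose k s := c * P (c / s).
have ki : injective k.
  move=> s1 s2; rewrite /k => /(mulfI c0) /Pinj /(mulfI c0) /invr_inj. done.
suff -> : Ag Q P c = k @: Ag P Q c by rewrite (card_imset _ ki).
apply/setP => z; apply/imsetP/imsetP.
- case=> x' _ ->.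
  set u := Q x'.
  have ex' : x' = P u by rewrite /u QK.
  rewrite ex'.
  set d := P u + P (c + u).
  have d0 : d != 0.
    rewrite /d addr_eq0c // (inj_eq Pinj) eq_sym addrr_eq. exact: c0.
  set r := Q (d / c).
  have r0 : r != 0 by rewrite /r Q_eq0 mulf_neq0 // invr_eq0.
  exists (c / r).
    apply/imsetP; exists (r^-1 * u) => //.
    have E1 : P r^-1 = c / d.
      by rewrite PV /r QK invfM invrK mulrC.
    have E2 : d + P u = P (c + u) by rewrite /d addrAC addxx add0r.
    have E3 : c + c / d * P u = c / d * P (c + u).
      by rewrite -E2 mulrDr mulfVK.
    rewrite PM E1 E3 -E1 -PM PK -mulrDr addrCA addxx addr0 mulrC. done.
  rewrite /k.
  have -> : c / (c / r) = r by field; rewrite c0 r0.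
  by rewrite /r QK mulrC mulfVK.
- case=> s' /imsetP [x _ ->] ->.
  set y := Q (c + P x).
  have Py : P y = c + P x by rewrite /y QK.
  set s := x + y.
  have s0 : s != 0.
    rewrite /s addr_eq0c //; apply: contraNneq c0 => exy.
    by move: Py; rewrite -exy => /eqP; rewrite eq_sym addrr_eq.
  set u := c / s * x.
  exists (P u) => //.
  rewrite PK.
  have E1 : c + u = c / s * y.
    by rewrite /u -{1}(divfK s0 c) -mulrDr /s addrAC addxx add0r.
  by rewrite E1 /u !PM -mulrDr Py addrCA addxx addr0 /k PM mulrC.
Qed.


Section Inv.
Variable a : F.
Hypothesis a0 : a != 0.

Definition sf c := Q c + Q (a + c).
Definition bf c := a * Q c / sf c.

Lemma sf0 c : sf c != 0.
Proof.
rewrite /sf addr_eq0c // (inj_eq Qinj) eq_sym addrr_eq. exact: a0.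
Qed.

Lemma bf_sym c : a + bf c = a * Q (a + c) / sf c.
Proof.
rewrite /bf -{1}(mulfK (sf0 c) a) -mulrDl; congr (_ / _).
by rewrite /sf mulrDr addrAC addxx add0r.
Qed.

Lemma sf_sym c : sf (a + c) = sf c.
Proof. by rewrite /sf addrA addxx add0r addrC. Qed.

Lemma bf_sym2 c : bf (a + c) = a + bf c.
Proof. by rewrite bf_sym /bf sf_sym. Qed.

Lemma bf_nz c : c != 0 -> bf c != 0.
Proof.
move=> c0; rewrite /bf; apply: mulf_neq0; last by rewrite invr_eq0; exact: sf0.
by apply: mulf_neq0 => //; rewrite Q_eq0.
Qed.

Lemma bf_na c : c != a -> bf c != a.
Proof.
move=> ca; apply: contraNneq ca => H.
have : bf c * sf c = a * sf c by rewrite H.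
rewrite /bf mulfVK; last exact: sf0.
move/(mulfI a0); rewrite /sf => /eqP; rewrite eq_sym addrl_eq Q_eq0 addr_eq0c //.
by rewrite eq_sym.
Qed.

Lemma bf_inj d1 d2 : bf d1 = bf d2 -> d1 = d2.
Proof.
rewrite /bf -!mulrA => /(mulfI a0) /eqP; rewrite eqr_div //; try exact: sf0.
rewrite /sf !mulrDr [Q d2 * Q d1]mulrC => /eqP /addrI.
rewrite -!QM => /Qinj /eqP; rewrite !mulrDr [d2 * d1]mulrC => /eqP /addIr.
exact: mulIf.
Qed.

Definition Tm (B : {set F}) : {set F} :=
  let c := odflt 0 [pick x in B :\ a] in [set a; bf c; a + bf c].

Lemma T_eq B c : B \in STS F -> a \in B -> c \in B -> c != a ->
  Tm B = [set a; bf c; a + bf c].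
Proof.
move=> HB aB cB ca; rewrite /Tm.
case: pickP => [c' | none] /=; last by move: (none c); rewrite !inE ca cB.
rewrite !inE => /andP [c'a c'B].
have ac : a != c by rewrite eq_sym.
have E := STS3 c2 HB aB cB ac.
move: c'B; rewrite E !inE (negbTE c'a) /= => /orP [/eqP -> // | /eqP ->].
rewrite bf_sym2 (addKr_pchar2 c2).
by apply/setP=> x; rewrite !inE; case: (x == a); case: (x == bf c); case: (x == a + bf c).
Qed.

Lemma T_facts B : B \in X a -> exists d,
  [/\ B \in STS F, a \in B, d \in B, d != a & d != 0] /\ Tm B = [set a; bf d; a + bf d].
Proof.
rewrite inE => /andP [HB aB]; have [d [dB da]] := other HB aB.
have [_ d0 _ _] := STS_facts c2 HB aB dB da.
exists d; split; first by [].
exact: T_eq.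
Qed.

Lemma T_STS d : d != 0 -> d != a -> [set a; bf d; a + bf d] \in STS F.
Proof.
move=> d0 da; apply: (STS_in c2 a0 (bf_nz d0)).
by rewrite eq_sym; apply: bf_na.
Qed.

Lemma T_in B : B \in X a -> Tm B \in X a.
Proof.
case/T_facts=> d [[HB aB dB da d0] ->].
by rewrite [_ \in X _]inE T_STS //= !inE eqxx.
Qed.

Lemma T_z B : B \in X a -> zg Q P a (Tm B) = Q a * a / Q (zg P Q a B).
Proof.
case/T_facts=> d [[HB aB dB da d0] ->].
rewrite (zg_any c2 P Q HB aB dB da).
have HT := T_STS d0 da.
have aT : a \in [set a; bf d; a + bf d] by rewrite !inE eqxx.
have bT : bf d \in [set a; bf d; a + bf d] by rewrite !inE eqxx orbT.
rewrite (zg_any c2 Q P HT aT bT (bf_na da)).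
rewrite PK -/(sf d) bf_sym /bf !PM !QK !PV -mulrDl -mulrDr addrCA addxx addr0.
by rewrite !QM PK QV PK [a * Q a]mulrC.
Qed.

Lemma T_inj : {in X a &, injective Tm}.
Proof.
move=> B1 B2 H1 H2 E.
have [d1 [[HB1 aB1 dB1 da1 d01] E1]] := T_facts H1.
have [d2 [[HB2 aB2 dB2 da2 d02] E2]] := T_facts H2.
have hb : bf d2 \in Tm B1 by rewrite E E2 !inE eqxx orbT.
move: hb; rewrite E1 !inE (negbTE (bf_na da2)) /= => /orP [/eqP hb | /eqP hb].
  have ed : d2 = d1 by apply: bf_inj.
  have ad1 : a != d1 by rewrite eq_sym.
  have ad2 : a != d2 by rewrite eq_sym.
  by rewrite (STS3 c2 HB1 aB1 dB1 ad1) (STS3 c2 HB2 aB2 dB2 ad2) ed.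
have ed : d2 = a + d1 by apply: bf_inj; rewrite hb bf_sym2.
have [_ _ adB1 _] := STS_facts c2 HB1 aB1 dB1 da1.
have ad1 : a != a + d1 by rewrite eq_sym addrl_eq.
have ad2 : a != d2 by rewrite eq_sym.
by rewrite (STS3 c2 HB1 aB1 adB1 ad1) (STS3 c2 HB2 aB2 dB2 ad2) ed.
Qed.

Lemma T_img : Tm @: X a = X a.
Proof.
apply/eqP; rewrite eqEcard; apply/andP; split.
  by apply/subsetP=> B' /imsetP [B HB ->]; apply: T_in.
rewrite (card_in_imset T_inj); exact: leqnn.
Qed.

Lemma zs_inv : perm_eq (zsg Q P a) (map (fun z => Q a * a / Q z) (zsg P Q a)).
Proof.
rewrite /zsg.
have R := reindex (zg Q P a) T_inj T_img.
apply: (perm_trans R).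
rewrite -map_comp; apply/seq.permP => p; congr (count p _); apply/eq_in_map => B.
rewrite mem_enum => HB /=; exact: T_z.
Qed.

End Inv.
Lemma indep a b : a != 0 -> b != 0 ->
  perm_eq (prof (zsg P Q a)) (prof (zsg P Q b)) /\ #|Ag P Q a| = #|Ag P Q b|.
Proof.
move=> a0 b0; pose l := Q (b / a).
have l0 : l != 0 by rewrite /l Q_eq0 mulf_neq0 // invr_eq0.
have Pl0 : P l != 0 by rewrite P_eq0.
have Eb : b = P l * a by rewrite /l QK mulfVK.
rewrite Eb; split; last by rewrite (A_scale a l0).
rewrite perm_sym; apply: (perm_trans (prof_perm (zs_scale a l0))).
by rewrite prof_map //; apply: mulfI.
Qed.
End PQ.

Section Frob.
Variable F : finFieldType.
Hypothesis c2 : 2 \in [pchar F].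
Variables P1 Q1 P2 Q2 phi : F -> F.
Hypothesis phii : injective phi.
Hypothesis phiD : {morph phi : x y / x + y}.
Hypothesis phi0 : phi 0 = 0.
Hypothesis HP : forall x, P2 x = phi (P1 x).
Hypothesis HQ : forall y, Q2 (phi y) = Q1 y.

Lemma A_frob a : Ag P2 Q2 (phi a) = Ag P1 Q1 a.
Proof. by apply: eq_imset => x; rewrite HP -phiD HQ. Qed.

Lemma zs_frob a : perm_eq (zsg P2 Q2 (phi a)) (map phi (zsg P1 Q1 a)).
Proof.
rewrite /zsg.
have E : [set phi @: B | B : {set F} in X a] = X (phi a) by exact: X_img.
have R := reindex (zg P2 Q2 (phi a)) (fun x y _ _ H => imset_inj phii H) E.
apply: (perm_trans R).
rewrite -map_comp; apply/seq.permP => p; congr (count p _); apply/eq_in_map => B.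
rewrite mem_enum inE => /andP [HB aB] /=.
have [b [bB ba]] := other HB aB.
rewrite (zg_any c2 P1 Q1 HB aB bB ba).
have HB' := STS_img phii phiD phi0 HB.
rewrite (zg_any c2 P2 Q2 HB' (imset_f _ aB) (imset_f _ bB)); last by rewrite (inj_eq phii).
by rewrite -phiD !HQ HP.
Qed.
End Frob.
Local Open Scope nat_scope.
Lemma pow2m_mod m k : 0 < m -> 2 ^ (m * k) = 1 %[mod 2 ^ m - 1].
Proof.
move=> m0; rewrite expnM -modnXm.
set n := 2 ^ m - 1.
have -> : 2 ^ m = n + 1 by rewrite /n subnK // expn_gt0.
by rewrite modnDl modnXm exp1n.
Qed.

Lemma modM_l n x y z : x = y %[mod n] -> x * z = y * z %[mod n].
Proof. by move=> H; rewrite -modnMml H modnMml. Qed.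

Lemma caseA m b k1 k2 t1 t2 : 0 < m ->
  t1 = b * 2 ^ k1 %[mod 2 ^ m - 1] -> t2 = b * 2 ^ k2 %[mod 2 ^ m - 1] ->
  t2 = t1 * 2 ^ (k2 + k1 * (m - 1)) %[mod 2 ^ m - 1].
Proof.
move=> m0 H1 H2; rewrite (modM_l _ H1) H2 -mulnA -expnD.
have -> : k1 + (k2 + k1 * (m - 1)) = k2 + m * k1.
  move: m0; case: (m) => // m' _; rewrite subn1 /= mulSn; lia.
by rewrite expnD mulnA -[in RHS]modnMmr pow2m_mod // modnMmr muln1.
Qed.

Lemma caseB m i j k1 k2 t1 t2 :
  t1 = i * 2 ^ k1 %[mod 2 ^ m - 1] -> t2 = j * 2 ^ k2 %[mod 2 ^ m - 1] ->
  i * j = 1 %[mod 2 ^ m - 1] ->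
  t1 * t2 = 2 ^ (k1 + k2) %[mod 2 ^ m - 1].
Proof.
move=> H1 H2 Hij; rewrite -modnMm H1 H2 modnMm.
have -> : i * 2 ^ k1 * (j * 2 ^ k2) = (i * j) * 2 ^ (k1 + k2).
  by rewrite expnD; lia.
by rewrite (modM_l _ Hij) mul1n.
Qed.

Lemma inv_uniq m i j1 j2 : i * j1 = 1 %[mod 2 ^ m - 1] -> i * j2 = 1 %[mod 2 ^ m - 1] ->
  j1 = j2 %[mod 2 ^ m - 1].
Proof.
move=> H1 H2.
rewrite -[X in X %% _ = _]muln1 -modnMmr -H2 modnMmr mulnCA mulnA.
by rewrite -modnMml H1 modnMml mul1n.
Qed.

Lemma dich m i t1 t2 : 0 < m ->
  in_coset_star (2 ^ m - 1) i t1 -> in_coset_star (2 ^ m - 1) i t2 ->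
  (exists e, t2 = t1 * 2 ^ e %[mod 2 ^ m - 1]) \/
  (exists e, t1 * t2 = 2 ^ e %[mod 2 ^ m - 1]).
Proof.
move=> m0; case=> [[k1 H1] | [j1 [Hj1 [k1 H1]]]]; case=> [[k2 H2] | [j2 [Hj2 [k2 H2]]]].
- by left; eexists; exact: caseA m0 H1 H2.
- by right; exists (k1 + k2); exact: caseB H1 H2 Hj2.
- by right; exists (k2 + k1); rewrite mulnC; exact: caseB H2 H1 Hj1.
- left; have H2' := etrans H2 (modM_l (2 ^ k2) (inv_uniq Hj2 Hj1)).
  by eexists; exact: caseA m0 H1 H2'.
Qed.

Local Open Scope ring_scope.

Lemma img_sys_ext (F : finFieldType) (f g : F -> F) S : f =1 g -> img_sys f S = img_sys g S.
Proof. by move=> fg; apply: eq_imset => B; apply: eq_imset. Qed.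

Lemma img_sys_comp (F : finFieldType) (f g : F -> F) S :
  img_sys f (img_sys g S) = img_sys (f \o g) S.
Proof.
apply/setP => Y; apply/imsetP/imsetP => [[B /imsetP [C HC ->] ->]|[C HC ->]].
  by exists C => //; apply/esym/imset_comp.
by exists (g @: C); [exact: imset_f | apply/imset_comp].
Qed.

Section Main.
Variable F : finFieldType.
Hypothesis c2 : 2 \in [pchar F].
Let addxx := addrr_pchar2 c2.

Lemma powf_mod a b : (0 < a)%N -> (0 < b)%N -> a = b %[mod #|F|.-1] -> @powf F a =1 powf b.
Proof.
move=> a0 b0 H x; rewrite /powf.
have [->|x0] := eqVneq x 0; first by rewrite !expr0n eqn0Ngt a0 eqn0Ngt b0.
have xn : x ^+ #|F|.-1 = 1.
  apply: (mulfI x0); rewrite -exprS prednK; last exact: ltnW (finNzRing_gt1 F).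
  by rewrite expf_card mulr1.
by rewrite -(expr_mod a xn) H expr_mod.
Qed.

Lemma frobD e (x y : F) : (x + y) ^+ (2 ^ e) = x ^+ (2 ^ e) + y ^+ (2 ^ e).
Proof.
elim: e => [|e IH]; first by rewrite expn0 !expr1.
by rewrite expnSr !exprM IH sqrrD mulr2n addxx addr0.
Qed.

Lemma frob_inj e : injective (@powf F (2 ^ e)).
Proof.
move=> x y H; apply/eqP; rewrite -(addr_eq0c c2).
have : (x + y) ^+ (2 ^ e) == 0 by rewrite frobD; rewrite /powf in H; rewrite H addxx.
by rewrite expf_eq0 expn_gt0.
Qed.

Lemma frob_add e : {morph @powf F (2 ^ e) : x y / x + y}.
Proof. by move=> x y; rewrite /powf frobD. Qed.

Lemma frob0 e : @powf F (2 ^ e) 0 = 0.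
Proof. by rewrite /powf expr0n eqn0Ngt expn_gt0. Qed.

Lemma powf_inj t : (0 < t)%N -> coprime t #|F|.-1 -> injective (@powf F t).
Proof.
move=> t0 ct.
case: (egcdnP #|F|.-1 t0) => km kn Hb _.
move: Hb; rewrite (eqP ct) => Hb.
have km0 : (0 < km)%N.
  by move: Hb; case: (km) => // /esym; rewrite mul0n addn1.
apply: (can_inj (g := @powf F km)) => x.
rewrite /powf -exprM.
have tk0 : (0 < t * km)%N by rewrite muln_gt0 t0 km0.
have := powf_mod tk0 (ltn0Sn 0) (_ : (t * km = 1 %[mod #|F|.-1])%N).
move=> /(_ _) E; rewrite /powf in E; rewrite E ?expr1 //.
by rewrite mulnC Hb modnMDl.
Qed.

Lemma tprops t : (0 < t)%N -> coprime t #|F|.-1 ->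
  [/\ cancel (@powf F t) (pinv t), cancel (@pinv F t) (powf t),
      {morph @powf F t : x y / x * y}, @powf F t 0 = 0 & @powf F t 1 = 1].
Proof.
move=> t0 ct; have i := powf_inj t0 ct; split.
- exact: finv_f i.
- exact: f_finv i.
- by move=> x y; rewrite /powf exprMn.
- by rewrite /powf expr0n eqn0Ngt t0.
- by rewrite /powf expr1n.
Qed.

Lemma Vstar_eq t (a : F) : Vstar t a = prof (zsg (powf t) (pinv t) a).
Proof. by []. Qed.
Lemma vF_eq t (a : F) : vF t a = #|Ag (powf t) (pinv t) a|.
Proof. by []. Qed.

End Main.

Section Cases.
Variable F : finFieldType.
Hypothesis c2 : 2 \in [pchar F].
Variables t1 t2 e : nat.
Hypothesis t10 : (0 < t1)%N.
Hypothesis ct1 : coprime t1 #|F|.-1.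
Hypothesis t20 : (0 < t2)%N.
Hypothesis ct2 : coprime t2 #|F|.-1.

Let phii := @frob_inj F c2 e.
Let phiD := @frob_add F c2 e.
Let phi0 := @frob0 F e.

Lemma phi_surj (a : F) : a != 0 -> exists2 a', a' != 0 & powf (2 ^ e) a' = a.
Proof.
move=> a0; exists (finv (powf (2 ^ e)) a); last exact: (f_finv phii a).
apply: contraNneq a0 => H; by rewrite -(f_finv phii a) H phi0.
Qed.

Lemma frob_case : (forall x : F, powf t2 x = powf (2 ^ e) (powf t1 x)) ->
  selfemb_iso F t1 t2 /\
  (forall a : F, a != 0 -> perm_eq (Vstar t1 a) (Vstar t2 a) /\ vF t1 a = vF t2 a).
Proof.
move=> HP.
have [PK1 QK1 PM1 P01 P11] := tprops t10 ct1.
have [PK2 QK2 PM2 P02 P12] := tprops t20 ct2.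
have HQ : forall y : F, pinv t2 (powf (2 ^ e) y) = pinv t1 y.
  by move=> y; rewrite -{1}(QK1 y) -HP PK2.
split.
  exists (perm phii); split; first by rewrite permE.
  left; split.
    rewrite (img_sys_ext _ (permE phii)); exact: img_STS phii phiD phi0.
  rewrite (img_sys_ext _ (permE phii)) img_sys_comp; apply: img_sys_ext => x /=.
  by rewrite HP.
move=> a a0; have [a' a'0 Ea] := phi_surj a0; subst a.
have [I1 I2] := indep c2 PK1 QK1 PM1 P01 a0 a'0.
split.
  rewrite !Vstar_eq; apply: (perm_trans I1); rewrite perm_sym.
  apply: (perm_trans (prof_perm (zs_frob c2 phii phiD phi0 HP HQ a'))).
  by rewrite prof_map.
by rewrite !vF_eq I2 (A_frob phiD HP HQ).
Qed.

Lemma inv_case : (forall x : F, powf t2 (powf t1 x) = powf (2 ^ e) x) ->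
  selfemb_iso F t1 t2 /\
  (forall a : F, a != 0 -> perm_eq (Vstar t1 a) (Vstar t2 a) /\ vF t1 a = vF t2 a).
Proof.
move=> HPi.
have [PK1 QK1 PM1 P01 P11] := tprops t10 ct1.
have [PK2 QK2 PM2 P02 P12] := tprops t20 ct2.
have HP : forall y : F, powf t2 y = powf (2 ^ e) (pinv t1 y).
  by move=> y; rewrite -{1}(QK1 y) HPi.
have HQ : forall y : F, pinv t2 (powf (2 ^ e) y) = powf t1 y.
  by move=> y; rewrite -HPi PK2.
have i2 := powf_inj t20 ct2.
split.
  exists (perm i2); split; first by rewrite permE.
  right; split.
    exact: (img_sys_ext _ (permE i2)).
  rewrite (img_sys_ext _ (permE i2)) img_sys_comp (img_sys_ext _ HPi).
  exact: img_STS phii phiD phi0.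
move=> a a0; have [a' a'0 Ea] := phi_surj a0; subst a.
have [I1 I2] := indep c2 PK1 QK1 PM1 P01 a0 a'0.
split.
  rewrite !Vstar_eq; apply: (perm_trans I1); rewrite perm_sym.
  apply: (perm_trans (prof_perm (zs_frob c2 phii phiD phi0 HP HQ a'))).
  rewrite prof_map //.
  apply: (perm_trans (prof_perm (zs_inv c2 PK1 QK1 PM1 P01 P11 a'0))).
  rewrite prof_map //.
  have k0 : pinv t1 a' * a' != 0.
    rewrite mulf_neq0 //; apply: contraNneq a'0 => H.
    by rewrite -(QK1 a') H P01.
  move=> z1 z2 /(mulfI k0) /invr_inj; exact: (can_inj QK1).
rewrite !vF_eq I2 (A_frob phiD HP HQ).
exact: esym (A_inv c2 PK1 QK1 PM1 P01 P11 a'0).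
Qed.
End Cases.

Theorem mainTheorem7 (F : finFieldType) (m : nat) (t1 t2 i : nat) :
  #|F| = (2 ^ m)%N ->
  monomial_perm m t1 -> monomial_perm m t2 ->
  in_coset_star (2 ^ m - 1) i t1 -> in_coset_star (2 ^ m - 1) i t2 ->
  selfemb_iso F t1 t2 /\
  (forall a : F, a != 0 ->
     perm_eq (Vstar t1 a) (Vstar t2 a) /\ vF t1 a = vF t2 a) /\
  (forall a b : F, a != 0 -> b != 0 ->
     perm_eq (Vstar t1 a) (Vstar t1 b) /\ vF t1 a = vF t1 b /\
     perm_eq (Vstar t2 a) (Vstar t2 b) /\ vF t2 a = vF t2 b).
Proof.
move=> cF [t10 ct1] [t20 ct2] H1 H2.
have c2 : 2 \in [pchar F] by apply: (card_finPcharP cF).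
have m0 : (0 < m)%N.
  rewrite lt0n; apply/negP => /eqP m0; have := finNzRing_gt1 F; by rewrite cF m0.
have eN : (2 ^ m - 1)%N = #|F|.-1 by rewrite cF subn1.
rewrite eN in ct1 ct2.
have D := dich m0 H1 H2; rewrite eN in D.
have indep_t : forall t, (0 < t)%N -> coprime t #|F|.-1 -> forall a b : F,
    a != 0 -> b != 0 -> perm_eq (Vstar t a) (Vstar t b) /\ vF t a = vF t b.
  move=> t t0 ct a b a0 b0; have [PK QK PM P0 P1] := tprops t0 ct.
  exact: (indep c2 PK QK PM P0 a0 b0).
have main2 : selfemb_iso F t1 t2 /\ (forall a : F, a != 0 ->
     perm_eq (Vstar t1 a) (Vstar t2 a) /\ vF t1 a = vF t2 a).
  case: D => [[e He] | [e He]].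
    apply: (frob_case c2 (e := e) t10 ct1 t20 ct2) => x.
    have tp : (0 < t1 * 2 ^ e)%N by rewrite muln_gt0 t10 expn_gt0.
    by have := powf_mod t20 tp He x; rewrite /powf exprM.
  apply: (inv_case c2 (e := e) t10 ct1 t20 ct2) => x.
  have tp : (0 < t1 * t2)%N by rewrite muln_gt0 t10 t20.
  by have := powf_mod tp (expn_gt0 2 e) He x; rewrite /powf exprM.
split; first exact: main2.1.
split; first exact: main2.2.
move=> a b a0 b0.
have [V1 W1] := indep_t t1 t10 ct1 a b a0 b0.
have [V2 W2] := indep_t t2 t20 ct2 a b a0 b0.
by split; [exact: V1 | split; [exact: W1 | split]].
Qed.
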